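(* Let $k\ge1$ and let $\alpha_0,\dots,\alpha_k$, $\beta_0,\dots,\beta_{k-1}$ be real numbers with $\alpha_k=1$ and $|\alpha_0|+|\beta_0|>0$. Consider the explicit linear multistep method $\sum_{\sigma=0}^k\alpha_\sigma y_{n+\sigma}=\Delta t\sum_{\sigma=0}^{k-1}\beta_\sigma f_{n+\sigma}$ for $\dot y=f(y)$, with polynomials $\varrho(X)=\sum_{j=0}^k\alpha_jX^j$ and $\sigma(X)=\sum_{j=0}^{k-1}\beta_jX^j$. Assume the method is stable, i.e. every root of $\varrho$ has modulus $\le1$ and the roots of modulus $1$ are simple. Assume also that it is of order at least $1$, i.e. $\varrho(1)=0$ and $\varrho'(1)=\sigma(1)\neq0$. Then the stability region of the method contains no positive real number.
   Context: The stability region of the method is the set of $\mu\in\mathbb{C}$ such that every root $\zeta$ of the polynomial $\varrho(\zeta)-\mu\,\sigma(\zeta)$ satisfies $|\zeta|\le1$, and the roots with $|\zeta|=1$ are simple. Equivalently, it is the set of $\mu$ for which all solutions of $\sum_{\sigma=0}^k\alpha_\sigma x_{n+\sigma}=\mu\sum_{\sigma=0}^{k-1}\beta_\sigma x_{n+\sigma}$ are bounded. *)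

(* Defs.v *)
From HB Require Import structures.
From mathcomp Require Import all_boot all_order all_algebra.
From mathcomp Require Import complex.
Set Implicit Arguments. Unset Strict Implicit. Unset Printing Implicit Defensive.
Import Order.TTheory GRing.Theory Num.Theory.
Local Open Scope ring_scope.

Definition rho_poly (R : rcfType) (k : nat) (alpha : nat -> R) : {poly R} :=
  \poly_(j < k.+1) alpha j.
Definition sigma_poly (R : rcfType) (k : nat) (beta : nat -> R) : {poly R} :=
  \poly_(j < k) beta j.

Definition polyC_of (R : rcfType) (p : {poly R}) : {poly R[i]} :=
  map_poly (fun x : R => x%:C%C) p.

Definition root_condition (R : rcfType) (p : {poly R[i]}) : Prop :=
  forall z : R[i], root p z -> `|z| <= 1 /\ (`|z| = 1 -> mup z p = 1%N).

Definition stability_region (R : rcfType) (k : nat) (alpha beta : nat -> R)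
  (mu : R[i]) : Prop :=
  root_condition (polyC_of (rho_poly k alpha) - mu *: polyC_of (sigma_poly k beta)).

(* Main.v *)
Require Import Defs.
From HB Require Import structures.
From mathcomp Require Import all_boot all_order all_algebra.
From mathcomp Require Import complex polyrcf.
Import Order.TTheory GRing.Theory Num.Theory.
Local Open Scope ring_scope.

Lemma root_right {R : rcfType} (p : {poly R}) (a : R) :
  0 < lead_coef p -> p.[a] < 0 -> exists x, a < x /\ root p x.
Proof.
move=> lc pa.
have [n Hn] := poly_pinfty_gt_lc lc.
have hb : p.[Num.max a n] >= lead_coef p by apply: Hn; rewrite le_max lexx orbT.
have lab : a <= Num.max a n by rewrite le_max lexx.
have hneg : p.[a] * p.[Num.max a n] < 0.
  by rewrite pmulr_llt0 // (lt_le_trans lc hb).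
have [x xin rx] := poly_ivtoo lab hneg.
exists x; split => //; by rewrite (itvP xin).
Qed.

Lemma polyC_ofE (R : rcfType) (p : {poly R}) (x : R) :
  (polyC_of p).[x%:C%C] = (p.[x])%:C%C.
Proof.
have -> : polyC_of p = map_poly (real_complex R) p by [].
by rewrite horner_map.
Qed.

Lemma bad (R : rcfType) (P : {poly R[i]}) : root_condition P ->
    forall x : R, 1 < x -> root P x%:C%C -> False.
Proof.
  move=> HP x x1 rx; have [+ _] := HP _ rx.
  have x0 : 0 <= x by apply: ltW; apply: lt_trans x1; exact: ltr01.
  rewrite ger0_norm ?ler0c //.
  have -> : (1 : R[i]) = (1%:C)%C by [].
  by rewrite lecR leNgt x1.
Qed.

Lemma sig_pos {R : rcfType} (rho sig : {poly R}) :
  lead_coef rho = 1 -> root_condition (polyC_of rho) ->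
  rho.[1] = 0 -> rho^`().[1] = sig.[1] -> sig.[1] != 0 -> 0 < sig.[1].
Proof.
move=> lrho Hrho r1 d1 s1.
  have /factor_theorem [q Hq] : root rho 1 by apply/rootP.
  have dq : rho^`().[1] = q.[1].
    rewrite Hq derivM derivB derivX derivC subr0 mulr1 !hornerE.
    rewrite subrr mulr0; by rewrite ?addr0 ?add0r.
  rewrite -d1 dq; rewrite ltNge le_eqVlt negb_or.
  apply/andP; split.
    by apply/eqP => h; move: s1; rewrite -d1 dq h eqxx.
  apply/negP => qneg.
  have lq : lead_coef q = 1.
    by move: lrho; rewrite Hq lead_coefM lead_coefXsubC mulr1.
  have lq0 : 0 < lead_coef q by rewrite lq ltr01.
  have [x [x1 rx]] := @root_right R q 1 lq0 qneg.
  apply: (@bad R _ Hrho x x1).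
  by rewrite /root polyC_ofE Hq hornerM (rootP rx) mul0r.
Qed.

Lemma final (R : rcfType) (rho sig : {poly R}) (mu : R) (k : nat) :
  lead_coef rho = 1 -> size rho = k.+1 -> (size sig <= k)%N ->
  rho.[1] = 0 -> 0 < sig.[1] -> 0 < mu ->
  root_condition (polyC_of rho - mu%:C%C *: polyC_of sig) -> False.
Proof.
move=> lrho srho ssig r1 sp mu0 Hst.
pose p := rho - mu *: sig.
have lp : lead_coef p = 1.
  rewrite /p lead_coefDl ?lrho // size_opp srho ltnS.
  exact: leq_trans (size_scale_leq _ _) ssig.
have pneg : p.[1] < 0.
  by rewrite /p hornerD hornerN hornerZ r1 add0r oppr_lt0 mulr_gt0.
have lp0 : 0 < lead_coef p by rewrite lp ltr01.
have [x [x1 rx]] := @root_right R p 1 lp0 pneg.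
apply: (@bad R _ Hst x x1).
rewrite /root hornerD hornerN hornerZ !polyC_ofE.
have := rootP rx; rewrite /p hornerD hornerN hornerZ => /eqP.
rewrite subr_eq0 => /eqP ->.
by rewrite -rmorphM subrr.
Qed.

Theorem lemma2p4 (R : rcfType) (k : nat) (alpha beta : nat -> R) :
  (1 <= k)%N ->
  alpha k = 1 ->
  0 < `|alpha 0%N| + `|beta 0%N| ->
  (* stability of the method *)
  root_condition (polyC_of (rho_poly k alpha)) ->
  (* order at least 1 *)
  (rho_poly k alpha).[1] = 0 ->
  (rho_poly k alpha)^`().[1] = (sigma_poly k beta).[1] ->
  (sigma_poly k beta).[1] != 0 ->
  forall mu : R, 0 < mu -> ~ stability_region k alpha beta (mu%:C)%C.
Proof.
move=> k1 ak _ Hrho r1 d1 s1 mu mu0 Hst.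
have lrho : lead_coef (rho_poly k alpha) = 1.
  by rewrite /rho_poly lead_coef_poly //= ak oner_neq0.
have srho : size (rho_poly k alpha) = k.+1.
  by rewrite /rho_poly size_poly_eq //= ak oner_neq0.
have ssig : (size (sigma_poly k beta) <= k)%N by apply: size_poly.
have sp := @sig_pos R _ (sigma_poly k beta) lrho Hrho r1 d1 s1.
exact: (@final R _ _ mu k lrho srho ssig r1 sp mu0 Hst).
Qed.
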